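(* Let $I\subseteq\mathbb{R}$ be an open interval and let $f$ be a non-constant real analytic function on $I$ with $f(\mathbb{Q}\cap I)\subseteq\mathbb{Q}$. Assume there exists $\eta\in\mathbb{R}$ such that whenever $p/q\in I$ with $\gcd(p,q)=1$, $q\geq 2$, and $f(p/q)=p'/q'$ with $\gcd(p',q')=1$, one has $q'\leq q^{\eta}$. Then $f(\mathscr{L}\cap I)\subseteq\mathscr{L}$.
   Context: $\mathscr{L}$ denotes the set of Liouville numbers: real irrational numbers $\zeta$ such that for every $\eta>0$ the inequality $|\zeta-y/x|\leq x^{-\eta}$ has infinitely many rational solutions $y/x$ with $x\geq 1$. Fractions are written with positive denominators. *)

(* Defs.v *)
From Stdlib Require Import Reals ZArith List.
From Coquelicot Require Import Coquelicot.
Open Scope R_scope.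

Definition in_interval (a b : Rbar) (x : R) : Prop :=
  Rbar_lt a (Finite x) /\ Rbar_lt (Finite x) b.

Definition is_rational (x : R) : Prop :=
  exists p q : Z, (0 < q)%Z /\ x = IZR p / IZR q.

Definition real_analytic_on (a b : Rbar) (f : R -> R) : Prop :=
  forall x0, in_interval a b x0 ->
    exists (r : R) (c : nat -> R), 0 < r /\
      forall y, Rabs (y - x0) < r -> is_pseries c (y - x0) (f y).

Definition infinitely_many {T : Type} (P : T -> Prop) : Prop :=
  forall l : list T, exists t, P t /\ ~ In t l.

Definition Liouville (zeta : R) : Prop :=
  ~ is_rational zeta /\
  forall eta : R, 0 < eta ->
    infinitely_many (fun yx : Z * Z =>
      (1 <= snd yx)%Z /\
      Rabs (zeta - IZR (fst yx) / IZR (snd yx)) <= Rpower (IZR (snd yx)) (- eta)).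

(* Main.v *)
Require Import Defs.
From Stdlib Require Import Reals ZArith List.
From Coquelicot Require Import Coquelicot.
From Stdlib Require Import Lra Lia Classical.
Open Scope R_scope.


Lemma cont_eps (F : R -> R) x : continuity_pt F x ->
  forall eps, 0 < eps -> exists d, 0 < d /\ forall y, Rabs (y - x) < d -> Rabs (F y - F x) < eps.
Proof.
  intros H eps He. destruct (H eps He) as [d [Hd Hy]]. exists d; split; [lra|].
  intros y Hyd. destruct (Req_dec y x) as [->|Hne].
  - rewrite Rminus_diag, Rabs_R0; lra.
  - apply (Hy y). split; [now split|]. simpl. unfold R_dist. exact Hyd.
Qed.

Lemma rad_ge (c : nat -> R) r :
  (forall h, Rabs h < r -> ex_pseries c h) ->
  forall h, Rabs h < r -> Rbar_lt (Rabs h) (CV_radius c).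
Proof.
  intros Hex h Hh.
  set (h' := (Rabs h + r) / 2).
  assert (Hle : Rbar_le (Rabs h') (CV_radius c)).
  { apply Rbar_not_lt_le. intro Hlt. apply (CV_disk_outside c h' Hlt).
    assert (Hs := Hex h' ltac:(unfold h'; rewrite (Rabs_pos_eq ((Rabs h + r) / 2)); [lra| pose proof (Rabs_pos h); lra])).
    apply ex_series_lim_0 in Hs.
    eapply is_lim_seq_ext; [|exact Hs]. intro n. simpl.
    rewrite pow_n_pow. unfold scal; simpl; unfold mult; simpl. ring. }
  eapply Rbar_lt_le_trans; [|exact Hle]. simpl.
  unfold h'; rewrite (Rabs_pos_eq ((Rabs h + r) / 2)); [lra| pose proof (Rabs_pos h); lra].
Qed.

Lemma CV_radius_decr_n (c : nat -> R) k : CV_radius (PS_decr_n c k) = CV_radius c.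
Proof.
  induction k; simpl.
  - apply CV_radius_ext. intro n; reflexivity.
  - rewrite <- IHk, <- (CV_radius_decr_1 (PS_decr_n c k)). apply CV_radius_ext. intro n.
    unfold PS_decr_n, PS_decr_1. f_equal. lia.
Qed.

Lemma sum_low (c : nat -> R) h n : (forall m, (1 <= m <= n)%nat -> c m = 0) ->
  sum_f_R0 (fun k => c k * h ^ k) n = c 0%nat.
Proof.
  induction n; intros H; simpl. - ring.
  - rewrite IHn by (intros; apply H; lia). rewrite (H (S n)) by lia. ring.
Qed.

Lemma ps_ident (c : nat -> R) : Rbar_lt 0 (CV_radius c) ->
  (forall d, 0 < d -> exists h, 0 < Rabs h < d /\ Rbar_lt (Rabs h) (CV_radius c) /\ PSeries c h = c 0%nat) ->
  forall n, (1 <= n)%nat -> c n = 0.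
Proof.
  intros Hr Hz.
  assert (K : forall k n, (1 <= n <= k)%nat -> c n = 0).
  { induction k; intros n Hn; [lia|].
    destruct (Nat.eq_dec n (S k)) as [->|]; [|apply IHk; lia].
    destruct (Req_dec (c (S k)) 0) as [|Hne]; [assumption|exfalso].
    set (G := PSeries (PS_decr_n c (S k))).
    assert (Hc : continuity_pt G 0).
    { apply PSeries_continuity. rewrite CV_radius_decr_n, Rabs_R0. exact Hr. }
    assert (HG0 : G 0 = c (S k)).
    { unfold G. rewrite PSeries_0. unfold PS_decr_n. f_equal; lia. }
    destruct (cont_eps G 0 Hc (Rabs (c (S k))) ltac:(apply Rabs_pos_lt; exact Hne)) as [d [Hd Hdd]].
    destruct (Hz d Hd) as [h [[Hh1 Hh2] [Hh3 Hh4]]].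
    rewrite (PSeries_decr_n c k h (CV_radius_inside _ _ Hh3)) in Hh4.
    rewrite sum_low in Hh4 by (intros; apply IHk; lia).
    assert (Gh : G h = 0).
    { assert (h ^ S k <> 0) by (apply pow_nonzero; intro E; rewrite E, Rabs_R0 in Hh1; lra).
      unfold G. apply (Rmult_eq_reg_l (h ^ S k)); [|assumption]. lra. }
    specialize (Hdd h ltac:(rewrite Rminus_0_r; lra)). rewrite Gh, HG0 in Hdd.
    rewrite Rminus_0_l, Rabs_Ropp in Hdd. lra. }
  intros n Hn. apply (K n). lia.
Qed.

Lemma ps_const (c : nat -> R) : (forall n, (1 <= n)%nat -> c n = 0) ->
  forall h, Rbar_lt (Rabs h) (CV_radius c) -> PSeries c h = c 0%nat.
Proof.
  intros H h Hh. rewrite (PSeries_decr_n c 0 h (CV_radius_inside _ _ Hh)). simpl.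
  rewrite (PSeries_ext (PS_decr_n c 1) (fun _ => 0)).
  - rewrite PSeries_const_0. ring.
  - intro n. unfold PS_decr_n. apply H. lia.
Qed.


Lemma loc_rad (f : R -> R) (x0 r : R) (c : nat -> R) (Hr : 0 < r) (Hps : forall y, Rabs (y - x0) < r -> is_pseries c (y - x0) (f y)) : forall h, Rabs h < r -> Rbar_lt (Rabs h) (CV_radius c).
Proof.
  apply rad_ge. intros h Hh. exists (f (x0 + h)).
  assert (H := Hps (x0 + h) ltac:(now replace (x0 + h - x0) with h by ring)).
  now replace (x0 + h - x0) with h in H by ring.
Qed.

Lemma loc_eq (f : R -> R) (x0 r : R) (c : nat -> R) (Hr : 0 < r) (Hps : forall y, Rabs (y - x0) < r -> is_pseries c (y - x0) (f y)) : forall y, Rabs (y - x0) < r -> f y = PSeries c (y - x0).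
Proof. intros y Hy. symmetry. apply is_pseries_unique, Hps, Hy. Qed.

Lemma loc_f0 (f : R -> R) (x0 r : R) (c : nat -> R) (Hr : 0 < r) (Hps : forall y, Rabs (y - x0) < r -> is_pseries c (y - x0) (f y)) : f x0 = c 0%nat.
Proof. rewrite (loc_eq f x0 r c Hr Hps) by (rewrite Rminus_diag, Rabs_R0; lra). rewrite Rminus_diag. apply PSeries_0. Qed.

Lemma loc_lip (f : R -> R) (x0 r : R) (c : nat -> R) (Hr : 0 < r) (Hps : forall y, Rabs (y - x0) < r -> is_pseries c (y - x0) (f y)) : exists C, 0 < C /\ exists d, 0 < d /\
  forall y, Rabs (y - x0) < d -> Rabs (f y - f x0) <= C * Rabs (y - x0).
Proof.
  set (G := PSeries (PS_decr_n c 1)).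
  assert (Hr0 : Rbar_lt 0 (CV_radius c)).
  { rewrite <- Rabs_R0. apply (loc_rad f x0 r c Hr Hps). rewrite Rabs_R0; lra. }
  assert (Hc : continuity_pt G 0).
  { apply PSeries_continuity. rewrite CV_radius_decr_n, Rabs_R0. exact Hr0. }
  destruct (cont_eps G 0 Hc 1 ltac:(lra)) as [d [Hd Hdd]].
  exists (Rabs (G 0) + 1). split. { pose proof (Rabs_pos (G 0)); lra. }
  exists (Rmin d r). split. { apply Rmin_pos; lra. }
  intros y Hy. assert (Hy1 := Rmin_l d r). assert (Hy2 := Rmin_r d r).
  rewrite (loc_f0 f x0 r c Hr Hps), (loc_eq f x0 r c Hr Hps) by lra.
  rewrite (PSeries_decr_n c 0 (y - x0) (CV_radius_inside _ _ ((loc_rad f x0 r c Hr Hps) (y - x0) ltac:(lra)))). simpl.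
  replace (c 0%nat * 1 + (y - x0) * 1 * PSeries (PS_decr_n c 1) (y - x0) - c 0%nat)
    with ((y - x0) * G (y - x0)) by (unfold G; ring).
  rewrite Rabs_mult, Rmult_comm. apply Rmult_le_compat_r; [apply Rabs_pos|].
  specialize (Hdd (y - x0) ltac:(rewrite Rminus_0_r; lra)).
  pose proof (Rabs_triang_inv (G (y - x0)) (G 0)). lra.
Qed.

Lemma loc_ident (f : R -> R) (x0 r : R) (c : nat -> R) (Hr : 0 < r) (Hps : forall y, Rabs (y - x0) < r -> is_pseries c (y - x0) (f y)) v : (forall d, 0 < d -> exists y, 0 < Rabs (y - x0) < d /\ f y = v) ->
  forall y, Rabs (y - x0) < r -> f y = v.
Proof.
  intros Hz.
  assert (Hr0 : Rbar_lt 0 (CV_radius c)).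
  { rewrite <- Rabs_R0. apply (loc_rad f x0 r c Hr Hps). rewrite Rabs_R0; lra. }
  assert (Hv : c 0%nat = v).
  { destruct (Req_dec (c 0%nat) v) as [|Hne]; [assumption|exfalso].
    assert (Hc : continuity_pt (PSeries c) 0).
    { apply PSeries_continuity. rewrite Rabs_R0. exact Hr0. }
    destruct (cont_eps _ 0 Hc (Rabs (v - c 0%nat)) ltac:(apply Rabs_pos_lt; lra)) as [d [Hd Hdd]].
    destruct (Hz (Rmin d r) ltac:(apply Rmin_pos; lra)) as [y [[Hy1 Hy2] Hy3]].
    assert (Hm1 := Rmin_l d r). assert (Hm2 := Rmin_r d r).
    specialize (Hdd (y - x0) ltac:(rewrite Rminus_0_r; lra)).
    rewrite <- (loc_eq f x0 r c Hr Hps), PSeries_0, Hy3 in Hdd by lra. lra. }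
  assert (Hc : forall n, (1 <= n)%nat -> c n = 0).
  { apply ps_ident; [exact Hr0|]. intros d Hd.
    destruct (Hz (Rmin d r) ltac:(apply Rmin_pos; lra)) as [y [[Hy1 Hy2] Hy3]].
    assert (Hm1 := Rmin_l d r). assert (Hm2 := Rmin_r d r).
    exists (y - x0). split; [lra|]. split; [apply (loc_rad f x0 r c Hr Hps); lra|].
    rewrite <- (loc_eq f x0 r c Hr Hps) by lra. congruence. }
  intros y Hy. rewrite (loc_eq f x0 r c Hr Hps) by exact Hy. rewrite ps_const; [exact Hv|exact Hc|].
  apply (loc_rad f x0 r c Hr Hps), Hy.
Qed.

Lemma int_conv a b x y w : in_interval a b x -> in_interval a b y -> 0 <= w <= 1 ->
  in_interval a b (x + w * (y - x)).
Proof.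
  unfold in_interval; intros [Hx1 Hx2] [Hy1 Hy2] Hw.
  destruct a as [a| |]; destruct b as [b| |]; simpl in *; try tauto; split; try exact I;
  first [ assert (0 <= (1 - w) * (x - a)) by (apply Rmult_le_pos; lra);
          assert (0 <= w * (y - a)) by (apply Rmult_le_pos; lra); nra
        | assert (0 <= (1 - w) * (b - x)) by (apply Rmult_le_pos; lra);
          assert (0 <= w * (b - y)) by (apply Rmult_le_pos; lra); nra ].
Qed.

Lemma int_nbhd a b x : in_interval a b x -> exists d, 0 < d /\ forall y, Rabs (y - x) < d -> in_interval a b y.
Proof.
  unfold in_interval; intros [H1 H2].
  assert (Ha : exists da, 0 < da /\ forall y, Rabs (y - x) < da -> Rbar_lt a y).
  { destruct a as [a| |]; simpl in *.
    - exists (x - a). split; [lra|]. intros y Hy. apply Rabs_def2 in Hy. lra.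
    - tauto.
    - exists 1. split; [lra|]. intros; exact I. }
  assert (Hb : exists db, 0 < db /\ forall y, Rabs (y - x) < db -> Rbar_lt y b).
  { destruct b as [b| |]; simpl in *.
    - exists (b - x). split; [lra|]. intros y Hy. apply Rabs_def2 in Hy. lra.
    - exists 1. split; [lra|]. intros; exact I.
    - tauto. }
  destruct Ha as [da [Hda Ha]]. destruct Hb as [db [Hdb Hb]].
  exists (Rmin da db). split; [apply Rmin_pos; lra|].
  intros y Hy. pose proof (Rmin_l da db). pose proof (Rmin_r da db).
  split; [apply Ha|apply Hb]; lra.
Qed.

Definition Acc (f : R -> R) v x0 := forall d, 0 < d -> exists y, 0 < Rabs (y - x0) < d /\ f y = v.

Lemma an_ident a b f x0 v : real_analytic_on a b f -> in_interval a b x0 -> Acc f v x0 ->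
  exists rho, 0 < rho /\ forall y, Rabs (y - x0) < rho -> f y = v.
Proof.
  intros Han Hx HA. destruct (Han x0 Hx) as [r [c [Hr Hps]]].
  exists r. split; [exact Hr|]. exact (loc_ident f x0 r c Hr Hps v HA).
Qed.

Lemma an_lip a b f x0 : real_analytic_on a b f -> in_interval a b x0 ->
  exists C, 0 < C /\ exists d, 0 < d /\
  forall y, Rabs (y - x0) < d -> Rabs (f y - f x0) <= C * Rabs (y - x0).
Proof.
  intros Han Hx. destruct (Han x0 Hx) as [r [c [Hr Hps]]].
  exact (loc_lip f x0 r c Hr Hps).
Qed.

Lemma glob a b f v x1 : real_analytic_on a b f -> in_interval a b x1 -> Acc f v x1 ->
  forall x2, in_interval a b x2 -> f x2 = v.
Proof.
  intros Han Hx1 HA x2 Hx2.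
  destruct (an_ident a b f x1 v Han Hx1 HA) as [r1 [Hr1 Hf1]].
  assert (Hfx1 : f x1 = v) by (apply Hf1; rewrite Rminus_diag, Rabs_R0; lra).
  set (d := x2 - x1).
  destruct (Req_dec d 0) as [Hd0|Hd0].
  { replace x2 with x1 by (unfold d in Hd0; lra). exact Hfx1. }
  assert (Had : 0 < Rabs d) by (apply Rabs_pos_lt; exact Hd0).
  set (T := fun u => 0 <= u <= 1 /\ forall w, 0 <= w <= u -> f (x1 + w * d) = v).
  assert (HT0 : T 0).
  { split; [lra|]. intros w Hw. replace w with 0 by lra. rewrite Rmult_0_l, Rplus_0_r. exact Hfx1. }
  assert (Hb : bound T) by (exists 1; intros u [Hu _]; lra).
  destruct (completeness T Hb (ex_intro _ 0 HT0)) as [s [Hub Hlub]].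
  assert (Hs0 : 0 <= s) by (apply Hub, HT0).
  assert (Hs1 : s <= 1) by (apply Hlub; intros u [Hu _]; lra).
  assert (HI : forall w, 0 <= w <= 1 -> in_interval a b (x1 + w * d)) by (intros; apply int_conv; auto).
  assert (HA' : forall w, 0 <= w < s -> f (x1 + w * d) = v).
  { intros w Hw. apply NNPP. intro Hne.
    assert (s <= w); [|lra]. apply Hlub. intros u [Hu Hu2].
    destruct (Rle_or_lt u w) as [|Hlt]; [assumption|]. exfalso. apply Hne, Hu2. lra. }
  set (p := x1 + s * d).
  assert (HAp : Acc f v p).
  { destruct (Req_dec s 0) as [Hs|Hs].
    - unfold p; rewrite Hs, Rmult_0_l, Rplus_0_r. exact HA.
    - intros e He. set (t := Rmin (s / 2) (e / (2 * Rabs d))).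
      assert (Ht1 := Rmin_l (s / 2) (e / (2 * Rabs d))).
      assert (Ht2 := Rmin_r (s / 2) (e / (2 * Rabs d))).
      fold t in Ht1, Ht2.
      assert (Ht0 : 0 < t) by (apply Rmin_pos; [lra|apply Rdiv_lt_0_compat; lra]).
      exists (x1 + (s - t) * d). split.
      + replace (x1 + (s - t) * d - p) with (- t * d) by (unfold p; ring).
        rewrite Rabs_mult, Rabs_Ropp, (Rabs_pos_eq t) by lra. split; [nra|].
        assert (t * Rabs d <= e / 2); [|lra].
        apply Rle_trans with (e / (2 * Rabs d) * Rabs d).
        * apply Rmult_le_compat_r; lra.
        * right. field. lra.
      + apply HA'. lra. }
  assert (Hp : in_interval a b p) by (apply HI; lra).
  destruct (an_ident a b f p v Han Hp HAp) as [rho [Hrho Hfp]].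
  assert (Hs : s = 1).
  { destruct (Rle_lt_or_eq_dec s 1 Hs1) as [Hlt|]; [exfalso|assumption].
    set (u := Rmin 1 (s + rho / (2 * Rabs d))).
    assert (Hu1 := Rmin_l 1 (s + rho / (2 * Rabs d))).
    assert (Hu2 := Rmin_r 1 (s + rho / (2 * Rabs d))).
    fold u in Hu1, Hu2.
    assert (Hq : 0 < rho / (2 * Rabs d)) by (apply Rdiv_lt_0_compat; lra).
    assert (Hus : s < u) by (unfold u; apply Rmin_glb_lt; lra).
    assert (u <= s); [|lra]. apply Hub. split; [lra|].
    intros w Hw. destruct (Rlt_or_le w s) as [Hws|Hws]; [apply HA'; lra|].
    apply Hfp. replace (x1 + w * d - p) with ((w - s) * d) by (unfold p; ring).
    rewrite Rabs_mult, (Rabs_pos_eq (w - s)) by lra.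
    assert ((w - s) * Rabs d <= rho / 2); [|lra].
    apply Rle_trans with (rho / (2 * Rabs d) * Rabs d).
    + apply Rmult_le_compat_r; [lra|]. lra.
    + right. field. lra. }
  replace x2 with p by (unfold p, d; rewrite Hs; ring).
  apply Hfp. rewrite Rminus_diag, Rabs_R0; lra.
Qed.

Lemma reduce_frac (y x : Z) : (1 <= x)%Z -> exists p q, Z.gcd p q = 1%Z /\ (1 <= q <= x)%Z /\
  IZR p / IZR q = IZR y / IZR x.
Proof.
  intros Hx. set (g := Z.gcd y x).
  assert (Hg0 : (0 <= g)%Z) by apply Z.gcd_nonneg.
  assert (Hgn : g <> 0%Z) by (intro E; apply Z.gcd_eq_0 in E; lia).
  destruct (Z.gcd_divide_l y x) as [ky Hky]. destruct (Z.gcd_divide_r y x) as [kx Hkx].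
  fold g in Hky, Hkx.
  assert (Hcop := Z.gcd_div_gcd y x g Hgn eq_refl).
  rewrite Hky, Hkx, !Z.div_mul in Hcop by exact Hgn.
  exists ky, kx. split; [exact Hcop|]. split; [nia|].
  rewrite Hky, Hkx, !mult_IZR. field. split.
  - apply not_0_IZR; exact Hgn.
  - apply not_0_IZR; nia.
Qed.

Lemma rat_reduce z : is_rational z -> exists p q, Z.gcd p q = 1%Z /\ (0 < q)%Z /\ z = IZR p / IZR q.
Proof.
  intros [y [x [Hx ->]]]. destruct (reduce_frac y x ltac:(lia)) as [p [q [H1 [H2 H3]]]].
  exists p, q. split; [exact H1|]. split; [lia|]. symmetry; exact H3.
Qed.

Lemma irr_ne z p q : ~ is_rational z -> z <> IZR p / IZR q.
Proof.
  intros Hi E. apply Hi.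
  destruct (Z.lt_trichotomy q 0) as [Hq|[Hq|Hq]].
  - exists (- p)%Z, (- q)%Z. split; [lia|]. rewrite E, !opp_IZR. field.
    apply not_0_IZR; lia.
  - exists 0%Z, 1%Z. split; [lia|]. rewrite E, Hq. unfold Rdiv. rewrite Rinv_0. lra.
  - exists p, q. split; [lia|exact E].
Qed.

Lemma int_dist z : ~ is_rational z -> exists d, 0 < d /\ forall k : Z, d <= Rabs (z - IZR k).
Proof.
  intros Hi. destruct (archimed z) as [H1 H2]. set (u := up z) in *.
  assert (Hne : z <> IZR (u - 1)).
  { intro E. apply (irr_ne z (u - 1) 1 Hi). rewrite E. field. }
  rewrite minus_IZR in Hne.
  exists (Rmin (IZR u - z) (z - (IZR u - 1))). split.
  { apply Rmin_pos; lra. }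
  intros k. destruct (Z_le_gt_dec u k) as [Hk|Hk].
  - apply IZR_le in Hk. rewrite Rabs_left1 by lra. pose proof (Rmin_l (IZR u - z) (z - (IZR u - 1))). lra.
  - assert (Hk' : (k <= u - 1)%Z) by lia. apply IZR_le in Hk'. rewrite minus_IZR in Hk'.
    rewrite Rabs_pos_eq by lra. pose proof (Rmin_r (IZR u - z) (z - (IZR u - 1))). lra.
Qed.

Lemma IZR_abs_ge1 n : n <> 0%Z -> 1 <= Rabs (IZR n).
Proof. intros Hn. rewrite <- abs_IZR. apply IZR_le. lia. Qed.

Lemma rat_sep a b p q : (0 < b)%Z -> (0 < q)%Z -> IZR a / IZR b <> IZR p / IZR q ->
  / (IZR b * IZR q) <= Rabs (IZR a / IZR b - IZR p / IZR q).
Proof.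
  intros Hb Hq Hne.
  assert (Hb' : 0 < IZR b) by (apply IZR_lt; lia).
  assert (Hq' : 0 < IZR q) by (apply IZR_lt; lia).
  replace (IZR a / IZR b - IZR p / IZR q) with (IZR (a * q - p * b) * / (IZR b * IZR q))
    by (rewrite minus_IZR, !mult_IZR; field; lra).
  rewrite Rabs_mult, (Rabs_pos_eq (/ _)) by (left; apply Rinv_0_lt_compat; nra).
  assert (Hn : (a * q - p * b <> 0)%Z).
  { intro E. apply Hne. assert (IZR (a * q) = IZR (p * b)) by (f_equal; lia).
    rewrite !mult_IZR in H.
    replace (IZR a / IZR b) with (IZR a * IZR q / (IZR b * IZR q)) by (field; lra).
    rewrite H. field; lra. }
  pose proof (IZR_abs_ge1 _ Hn). assert (0 < / (IZR b * IZR q)) by (apply Rinv_0_lt_compat; nra).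
  nra.
Qed.

Fixpoint lmin (z : R) (l : list (Z * Z)) : R :=
  match l with
  | nil => 1
  | pr :: l' => Rmin (lmin z l') (Rabs (z - IZR (fst pr) / IZR (snd pr)))
  end.

Lemma lmin_pos z l : ~ is_rational z -> 0 < lmin z l.
Proof.
  intros Hi. induction l as [|pr l IH]; simpl; [lra|].
  apply Rmin_pos; [exact IH|]. apply Rabs_pos_lt. intro E. apply (irr_ne z (fst pr) (snd pr) Hi). lra.
Qed.

Lemma lmin_le z l pr : In pr l -> lmin z l <= Rabs (z - IZR (fst pr) / IZR (snd pr)).
Proof.
  induction l as [|pr' l IH]; simpl; [tauto|]. intros [->|H].
  - apply Rmin_r.
  - eapply Rle_trans; [apply Rmin_l|]. apply IH, H.
Qed.

Definition rng (lo : Z) (n : nat) : list Z := map (fun k => (lo + Z.of_nat k)%Z) (seq 0 n).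

Lemma in_rng lo n z : (lo <= z < lo + Z.of_nat n)%Z -> In z (rng lo n).
Proof.
  intros H. unfold rng. apply in_map_iff. exists (Z.to_nat (z - lo)). split; [lia|].
  apply in_seq. lia.
Qed.

Lemma big_approx z : Liouville z -> forall mu, 0 < mu -> forall N : nat,
  exists y x : Z, (1 <= x)%Z /\ (Z.of_nat N < x)%Z /\
    Rabs (z - IZR y / IZR x) <= Rpower (IZR x) (- mu).
Proof.
  intros [Hi HL] mu Hmu N.
  destruct (archimed (Rabs z)) as [HB _]. set (B := up (Rabs z)) in *.
  assert (HB0 : (0 < B)%Z) by (apply lt_IZR; pose proof (Rabs_pos z); lra).
  set (K := (Z.of_nat N * (B + 1))%Z).
  set (L := list_prod (rng (- K) (Z.to_nat (2 * K + 1))) (rng 1 N)).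
  destruct (HL mu Hmu L) as [[y x] [[Hx Hb] HnL]]. simpl in Hx, Hb.
  exists y, x. split; [exact Hx|]. split; [|exact Hb].
  destruct (Z_lt_le_dec (Z.of_nat N) x) as [|Hle]; [assumption|exfalso].
  apply HnL. unfold L. apply in_prod; [|apply in_rng; lia].
  apply in_rng.
  assert (Hx' : 1 <= IZR x) by (apply IZR_le; lia).
  assert (Hp : Rpower (IZR x) (- mu) <= 1).
  { rewrite <- (Rpower_O (IZR x)) by lra. apply Rle_Rpower; lra. }
  assert (Hy : Rabs (IZR y) <= IZR x * (Rabs z + 1)).
  { assert (Rabs (IZR y / IZR x) <= Rabs z + 1).
    { pose proof (Rabs_triang_inv (IZR y / IZR x) z).
      assert (Rabs (z - IZR y / IZR x) = Rabs (IZR y / IZR x - z)) by (rewrite <- Rabs_Ropp; f_equal; ring).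
      lra. }
    replace (IZR y) with (IZR x * (IZR y / IZR x)) by (field; lra).
    rewrite Rabs_mult, (Rabs_pos_eq (IZR x)) by lra. apply Rmult_le_compat_l; lra. }
  assert (HyK : Rabs (IZR y) <= IZR K).
  { unfold K. rewrite mult_IZR, plus_IZR, <- INR_IZR_INZ.
    apply IZR_le in Hle. rewrite <- INR_IZR_INZ in Hle.
    apply Rle_trans with (IZR x * (Rabs z + 1)); [exact Hy|].
    pose proof (Rabs_pos z); apply Rmult_le_compat; lra. }
  rewrite <- abs_IZR in HyK. apply le_IZR in HyK. lia.
Qed.

Lemma Rpower_pos x y : 0 < Rpower x y.
Proof. unfold Rpower. apply exp_pos. Qed.

Theorem corollary2p2 (a b : Rbar) (f : R -> R) :
  Rbar_lt a b ->
  real_analytic_on a b f ->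
  (exists x y, in_interval a b x /\ in_interval a b y /\ f x <> f y) ->
  (forall x, in_interval a b x -> is_rational x -> is_rational (f x)) ->
  (exists eta : R,
     forall p q p' q' : Z,
       Z.gcd p q = 1%Z -> (2 <= q)%Z ->
       in_interval a b (IZR p / IZR q) ->
       Z.gcd p' q' = 1%Z -> (0 < q')%Z ->
       f (IZR p / IZR q) = IZR p' / IZR q' ->
       IZR q' <= Rpower (IZR q) eta) ->
  forall zeta, in_interval a b zeta -> Liouville zeta -> Liouville (f zeta).
Proof.
  intros Hab Han [x1 [x2 [Hx1 [Hx2 Hne]]]] Hrat [eta Heta] z Hz HLz.
  pose proof HLz as [Hi HL].
  set (e' := Rmax eta 1). assert (He1 : 1 <= e') by apply Rmax_r.
  assert (He2 : eta <= e') by apply Rmax_l.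
  destruct (an_lip a b f z Han Hz) as [C [HC [dL [HdL Hlip]]]].
  destruct (int_nbhd a b z Hz) as [dI [HdI HI]].
  destruct (int_dist z Hi) as [dz [Hdz Hdist]].
  set (d1 := Rmin (Rmin dL dI) dz).
  assert (Hd1 : 0 < d1) by (unfold d1; repeat apply Rmin_pos; lra).
  assert (Hd1a : d1 <= dL) by (unfold d1; eapply Rle_trans; [apply Rmin_l|apply Rmin_l]).
  assert (Hd1b : d1 <= dI) by (unfold d1; eapply Rle_trans; [apply Rmin_l|apply Rmin_r]).
  assert (Hd1c : d1 <= dz) by (unfold d1; apply Rmin_r).
  assert (GOOD : forall mu, 1 <= mu -> forall K, exists (x p q p' q' : Z),
    (1 <= x)%Z /\ K < IZR x /\ Rpower (IZR x) (- mu) <= / IZR x /\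
    Rabs (z - IZR p / IZR q) <= Rpower (IZR x) (- mu) /\ z <> IZR p / IZR q /\
    f (IZR p / IZR q) = IZR p' / IZR q' /\ (0 < q')%Z /\
    IZR q' <= Rpower (IZR x) e' /\
    Rabs (f z - IZR p' / IZR q') <= C * Rpower (IZR x) (- mu)).
  { intros mu Hmu K.
    set (K' := Rmax K (/ d1)).
    assert (HK1 := Rmax_l K (/ d1)). assert (HK2 := Rmax_r K (/ d1)). fold K' in HK1, HK2.
    destruct (big_approx z HLz mu ltac:(lra) (Z.to_nat (up K'))) as [y [x [Hx [HxN Hb]]]].
    destruct (archimed K') as [Hup _].
    assert (HxK : K' < IZR x).
    { assert (Hz1 : (up K' < x)%Z) by lia. apply IZR_lt in Hz1. lra. }
    assert (Hx' : 1 <= IZR x) by (apply IZR_le; lia).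
    assert (Hpx : Rpower (IZR x) (- mu) <= / IZR x).
    { rewrite <- (Rpower_1 (IZR x)) at 2 by lra. rewrite <- Rpower_Ropp. apply Rle_Rpower; lra. }
    assert (Hinvd : / IZR x < d1).
    { assert (0 < / d1) by (apply Rinv_0_lt_compat; lra).
      rewrite <- (Rinv_inv d1). apply Rinv_lt_contravar; nra. }
    assert (Hclose : Rabs (z - IZR y / IZR x) < d1) by lra.
    destruct (reduce_frac y x Hx) as [p [q [Hg [Hq Hpq]]]].
    rewrite <- Hpq in Hb, Hclose.
    assert (Hq2 : (2 <= q)%Z).
    { destruct (Z.eq_dec q 1) as [E|]; [|lia]. exfalso. subst q.
      specialize (Hdist p). replace (IZR p / IZR 1) with (IZR p) in Hclose by (simpl; field). lra. }
    assert (Hdist' : Rabs (IZR p / IZR q - z) < d1).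
    { rewrite <- Rabs_Ropp. replace (- (IZR p / IZR q - z)) with (z - IZR p / IZR q) by ring. exact Hclose. }
    assert (HinI : in_interval a b (IZR p / IZR q)) by (apply HI; lra).
    assert (Hr : is_rational (IZR p / IZR q)) by (exists p, q; split; [lia|reflexivity]).
    destruct (rat_reduce _ (Hrat _ HinI Hr)) as [p' [q' [Hg' [Hq' Hf]]]].
    assert (Hbd := Heta p q p' q' Hg Hq2 HinI Hg' Hq' Hf).
    exists x, p, q, p', q'. split; [exact Hx|]. split; [lra|]. split; [exact Hpx|].
    split; [exact Hb|]. split; [apply irr_ne, Hi|]. split; [exact Hf|]. split; [exact Hq'|].
    split.
    - assert (Hq1 : 2 <= IZR q) by (apply IZR_le; lia).
      assert (Hqx : IZR q <= IZR x) by (apply IZR_le; lia).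
      apply Rle_trans with (Rpower (IZR q) eta); [exact Hbd|].
      apply Rle_trans with (Rpower (IZR q) e'); [apply Rle_Rpower; lra|].
      apply Rle_Rpower_l; lra.
    - rewrite <- Hf. rewrite <- Rabs_Ropp. replace (- (f z - f (IZR p / IZR q))) with (f (IZR p / IZR q) - f z) by ring.
      eapply Rle_trans; [apply Hlip; lra|]. apply Rmult_le_compat_l; [lra|].
      rewrite <- Rabs_Ropp. replace (- (IZR p / IZR q - z)) with (z - IZR p / IZR q) by ring. exact Hb. }
  assert (Hirr : ~ is_rational (f z)).
  { intro Hr. destruct (rat_reduce _ Hr) as [A [Bq [_ [HB Hfz]]]].
    assert (HB' : 0 < IZR Bq) by (apply IZR_lt; lia).
    assert (HAcc : Acc f (f z) z).
    { intros d Hd.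
      destruct (GOOD (e' + 1) ltac:(lra) (Rmax (/ d) (C * IZR Bq))) as
        [x [p [q [p' [q' [Hx [HxK [Hpx [Hb [Hnz [Hf [Hq' [Hqb Hlb]]]]]]]]]]]]].
      assert (HK1 := Rmax_l (/ d) (C * IZR Bq)). assert (HK2 := Rmax_r (/ d) (C * IZR Bq)).
      assert (Hx' : 1 <= IZR x) by (apply IZR_le; lia).
      exists (IZR p / IZR q). split.
      - split.
        + apply Rabs_pos_lt. intro E. apply Hnz. lra.
        + rewrite <- Rabs_Ropp. replace (- (IZR p / IZR q - z)) with (z - IZR p / IZR q) by ring.
          assert (/ IZR x < d).
          { assert (0 < / d) by (apply Rinv_0_lt_compat; lra).
            rewrite <- (Rinv_inv d). apply Rinv_lt_contravar; nra. }
          lra.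
      - destruct (Req_dec (f (IZR p / IZR q)) (f z)) as [|Hne2]; [assumption|exfalso].
        rewrite Hf, Hfz in Hne2. apply not_eq_sym in Hne2.
        assert (Hs := rat_sep A Bq p' q' HB Hq' Hne2). rewrite <- Hfz in Hs.
        replace (- (e' + 1)) with (- e' + - (1)) in Hlb by ring.
        rewrite Rpower_plus, !Rpower_Ropp, Rpower_1 in Hlb by lra.
        assert (Hq'0 : 0 < IZR q') by (apply IZR_lt; lia).
        set (P := Rpower (IZR x) e') in *.
        assert (HP : 0 < P) by apply Rpower_pos.
        assert (Hx0 : 0 < IZR x) by lra.
        assert (H1 : / (IZR Bq * P) <= / (IZR Bq * IZR q')).
        { apply Rinv_le_contravar; [nra|]. apply Rmult_le_compat_l; lra. }
        assert (H2 : C * (/ P * / IZR x) < / (IZR Bq * P)).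
        { replace (C * (/ P * / IZR x)) with ((C / IZR x) * / P) by (field; lra).
          rewrite Rinv_mult. apply Rmult_lt_compat_r; [apply Rinv_0_lt_compat; lra|].
          apply (Rmult_lt_reg_r (IZR x * IZR Bq)); [nra|].
          replace (C / IZR x * (IZR x * IZR Bq)) with (C * IZR Bq) by (field; lra).
          replace (/ IZR Bq * (IZR x * IZR Bq)) with (IZR x) by (field; lra). lra. }
        lra. }
    assert (E1 := glob a b f (f z) z Han Hz HAcc x1 Hx1).
    assert (E2 := glob a b f (f z) z Han Hz HAcc x2 Hx2). congruence. }
  split; [exact Hirr|]. intros eps Heps l.
  assert (Hdl := lmin_pos (f z) l Hirr). set (dl := lmin (f z) l) in *.
  destruct (GOOD (eps * e' + 1) ltac:(nra) (Rmax C (C / dl))) as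
        [x [p [q [p' [q' [Hx [HxK [Hpx [Hb [Hnz [Hf [Hq' [Hqb Hlb]]]]]]]]]]]]].
  assert (HK1 := Rmax_l C (C / dl)). assert (HK2 := Rmax_r C (C / dl)).
  assert (Hx' : 1 <= IZR x) by (apply IZR_le; lia).
  assert (Hx0 : 0 < IZR x) by lra.
  assert (HCx : C * Rpower (IZR x) (- (eps * e' + 1)) < dl).
  { apply Rle_lt_trans with (C * / IZR x); [apply Rmult_le_compat_l; lra|].
    apply (Rmult_lt_reg_r (IZR x)); [lra|].
    replace (C * / IZR x * IZR x) with C by (field; lra).
    apply (Rmult_lt_reg_r (/ dl)); [apply Rinv_0_lt_compat; lra|].
    replace (dl * IZR x * / dl) with (IZR x) by (field; lra). unfold Rdiv in HK2. lra. }
  exists (p', q'). simpl. split; [split|].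
  - lia.
  - eapply Rle_trans; [exact Hlb|].
    replace (- (eps * e' + 1)) with (- (eps * e') + - (1)) by ring.
    rewrite Rpower_plus, !Rpower_Ropp, Rpower_1 by lra.
    assert (Hq'0 : 0 < IZR q') by (apply IZR_lt; lia).
    assert (HR : Rpower (IZR q') eps <= Rpower (IZR x) (eps * e')).
    { rewrite Rmult_comm, <- Rpower_mult. apply Rle_Rpower_l; [lra|]. split; [lra|exact Hqb]. }
    assert (H0 := Rpower_pos (IZR q') eps). assert (H0' := Rpower_pos (IZR x) (eps * e')).
    apply Rle_trans with (/ Rpower (IZR x) (eps * e')); [|apply Rinv_le_contravar; lra].
    replace (C * (/ Rpower (IZR x) (eps * e') * / IZR x)) with ((C / IZR x) * / Rpower (IZR x) (eps * e')) by (field; lra).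
    rewrite <- (Rmult_1_l (/ Rpower (IZR x) (eps * e'))) at 2.
    apply Rmult_le_compat_r; [left; apply Rinv_0_lt_compat; lra|].
    apply (Rmult_le_reg_r (IZR x)); [lra|]. replace (C / IZR x * IZR x) with C by (field; lra). lra.
  - intro Hin. apply lmin_le with (z := f z) in Hin. simpl in Hin. fold dl in Hin. lra.
Qed.
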